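(* Let $X$ be a nonempty finite set. For all $\kappa,\lambda,\mu,\nu\in\mathcal{D}(X)$ and every $\omega\in\Omega(\lambda,\mu)$, there exists $\pi\in\Omega(\kappa,\nu)$ such that $d_{TV}(\omega,\pi)\le d_{TV}(\kappa,\lambda)+d_{TV}(\mu,\nu)$.
   Context: $\mathcal{D}(Y)$ is the set of probability distributions on a finite set $Y$. $\Omega(\mu,\nu)=\{\omega\in\mathcal{D}(X\times X)\mid\forall x:\sum_y\omega(x,y)=\mu(x),\ \sum_y\omega(y,x)=\nu(x)\}$. For distributions $\alpha,\beta$ on a finite set $Y$ (here $Y=X$ or $Y=X\times X$), $d_{TV}(\alpha,\beta)=\max_{y\in Y}|\alpha(y)-\beta(y)|$. *)

(* Defs.v *)
From HB Require Import structures.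
From mathcomp Require Import all_boot all_order all_algebra.
Set Implicit Arguments. Unset Strict Implicit. Unset Printing Implicit Defensive.
Import Order.TTheory GRing.Theory Num.Theory.
Local Open Scope ring_scope.

Definition is_distr (R : realFieldType) (Y : finType) (alpha : Y -> R) : Prop :=
  (forall y, 0 <= alpha y) /\ \sum_(y : Y) alpha y = 1.

Definition is_coupling (R : realFieldType) (X : finType)
    (mu nu : X -> R) (omega : X * X -> R) : Prop :=
  is_distr omega /\
  (forall x, \sum_(y : X) omega (x, y) = mu x) /\
  (forall x, \sum_(y : X) omega (y, x) = nu x).

(* d_TV(alpha, beta) = max_y |alpha y - beta y| (as defined in the paper's
   context; the max of nonnegative values over a nonempty set, seeded by 0) *)
Definition dTV (R : realFieldType) (Y : finType) (alpha beta : Y -> R) : R :=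
  \big[Num.max/0]_(y : Y) `|alpha y - beta y|.

(* Main.v *)
Require Import Defs.
From HB Require Import structures.
From mathcomp Require Import all_boot all_order all_algebra.
From mathcomp Require Import ring lra.
Import Order.TTheory GRing.Theory Num.Theory.
Local Open Scope ring_scope.

Section Step.
Variables (R : realFieldType) (X : finType).

Lemma step (kappa lambda mu : X -> R)
    (hk : is_distr kappa) (hl : is_distr lambda)
    (omega : X * X -> R) (ho : is_coupling lambda mu omega)
    (d : R) (hd : forall x, `|kappa x - lambda x| <= d) :
  exists pi : X * X -> R, is_coupling kappa mu pi /\
    forall p, `|omega p - pi p| <= d.
Proof.
case: hk => k0 k1; case: hl => l0 l1.
case: ho => [[o0 o1] [orow ocol]].
pose m x := if kappa x <= lambda x then kappa x else lambda x.
pose c x := m x / lambda x.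
pose e x := kappa x - m x.
pose D := \sum_x e x.
pose r y := \sum_x omega (x, y) * (1 - c x).
pose pi (p : X * X) := omega p * c p.1 + e p.1 * r p.2 / D.
have m0 x : 0 <= m x by rewrite /m; case: ifP.
have ml x : m x <= lambda x by rewrite /m; case: ifP => // /negbT; rewrite -ltNge => /ltW.
have mk x : m x <= kappa x by rewrite /m; case: ifP => // /negbT; rewrite -ltNge => /ltW.
have e0 x : 0 <= e x by rewrite /e subr_ge0.
have ed x : e x <= d.
  apply: le_trans (hd x); rewrite /e /m; case: ifP => H; first by rewrite subrr.
  by apply: ler_norm.
have lmd x : lambda x - m x <= d.
  apply: le_trans (hd x); rewrite /m; case: ifP => H; last by rewrite subrr.
  by rewrite -normrN opprB; apply: ler_norm.
have c0 x : 0 <= c x by rewrite /c divr_ge0.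
have lc x : lambda x * c x = m x.
  have [l0x|ln0] := eqVneq (lambda x) 0.
    by rewrite l0x mul0r; apply/eqP; rewrite eq_le m0 -l0x ml.
  by rewrite /c mulrCA divff // mulr1.
have c1 x : c x <= 1.
  have [l0x|ln0] := eqVneq (lambda x) 0; first by rewrite /c l0x invr0 mulr0.
  have lp : 0 < lambda x by rewrite lt_def ln0 l0.
  by rewrite /c ler_pdivrMr // mul1r.
have ol x y : omega (x, y) <= lambda x.
  by rewrite -orow (bigD1 y) //= lerDl sumr_ge0.
have r0 y : 0 <= r y by rewrite /r sumr_ge0 // => x _; rewrite mulr_ge0 // subr_ge0.
have sD : D = 1 - \sum_x m x by rewrite /D /e sumrB k1.
have sr : \sum_y r y = D.
  rewrite sD -l1 -sumrB /r exchange_big; apply: eq_bigr => x _.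
  by rewrite -big_distrl /= orow mulrBr mulr1 lc.
have rD y : r y <= D by rewrite -sr (bigD1 y) //= lerDl sumr_ge0.
have D0 : 0 <= D by rewrite /D sumr_ge0.
have ry y : r y = mu y - \sum_x omega (x,y) * c x.
  by rewrite /r -ocol -sumrB; apply: eq_bigr => x _; rewrite mulrBr mulr1.
have rows x : \sum_y pi (x,y) = kappa x.
  rewrite /pi big_split /= -!big_distrl -big_distrr /= orow lc sr.
  have [D0'|Dn0] := eqVneq D 0.
    have ex : e x = 0 := psumr_eq0P (fun i _ => e0 i) D0' isT.
    rewrite ex !mul0r addr0.
    by move: ex; rewrite /e => /eqP; rewrite subr_eq0 => /eqP ->.
  by rewrite mulfK // /e addrC subrK.
exists pi; split.
  split; [split|split].
  - by move=> [x y]; rewrite /pi addr_ge0 ?mulr_ge0 ?invr_ge0.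
  - transitivity (\sum_x \sum_y pi (x,y)).
      by rewrite pair_bigA /=; apply: eq_bigr => -[].
    by rewrite (eq_bigr _ (fun x _ => rows x)) k1.
  - exact: rows.
  - move=> y; rewrite /pi big_split /= -big_distrl -big_distrl /=.
    have [D0'|Dn0] := eqVneq D 0.
      have ry0 : r y = 0 := psumr_eq0P (fun i _ => r0 i) (etrans sr D0') isT.
      rewrite -/D D0' !mul0r addr0.
      by move: ry0; rewrite ry => /eqP; rewrite subr_eq0 => /eqP ->.
    rewrite -/D mulrAC divff // mul1r ry.
    by rewrite addrC subrK.
move=> [x y]; rewrite /pi /=.
have a0 : 0 <= omega (x,y) * (1 - c x) by rewrite mulr_ge0 // subr_ge0.
have ad : omega (x,y) * (1 - c x) <= d.
  apply: le_trans (lmd x).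
  have -> : lambda x - m x = lambda x * (1 - c x) by rewrite mulrBr mulr1 lc.
  by rewrite ler_wpM2r // subr_ge0.
have b0 : 0 <= e x * r y / D by rewrite mulr_ge0 ?invr_ge0 ?mulr_ge0.
have bd : e x * r y / D <= d.
  apply: le_trans (ed x).
  rewrite -mulrA ler_piMr //.
  have [D0'|Dn0] := eqVneq D 0; first by rewrite D0' invr0 mulr0.
  by rewrite ler_pdivrMr ?mul1r // lt_def Dn0 D0.
have -> : omega (x, y) - (omega (x, y) * c x + e x * r y / D)
   = omega (x,y) * (1 - c x) - e x * r y / D by ring.
rewrite ler_norml; apply/andP; split; lra.
Qed.
End Step.

Lemma swap_coupling (R : realFieldType) (X : finType) (a b : X -> R)
  (w : X * X -> R) : is_coupling a b w -> is_coupling b a (fun p => w (p.2, p.1)).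
Proof.
case=> [[w0 w1] [wr wc]]; split; last by split.
split; first by move=> p; apply: w0.
rewrite -(pair_bigA _ (fun x y => w (y, x))) /= exchange_big /=.
by rewrite pair_bigA -w1; apply: eq_bigr => -[].
Qed.

Theorem corollary1 (R : realFieldType) (X : finType) (hX : (0 < #|X|)%N)
    (kappa lambda mu nu : X -> R)
    (hk : is_distr kappa) (hl : is_distr lambda)
    (hm : is_distr mu) (hn : is_distr nu)
    (omega : X * X -> R) (homega : is_coupling lambda mu omega) :
  exists pi : X * X -> R, is_coupling kappa nu pi /\
    dTV omega pi <= dTV kappa lambda + dTV mu nu.
Proof.
case/card_gt0P: hX => x0 _.
have dk x : `|kappa x - lambda x| <= dTV kappa lambda.
  exact: (le_bigmax 0 (fun y => `|kappa y - lambda y|) x).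
have dm x : `|nu x - mu x| <= dTV mu nu.
  by rewrite distrC; exact: (le_bigmax 0 (fun y => `|mu y - nu y|) x).
have [pi1 [c1 b1]] := @step _ _ _ _ _ hk hl _ homega _ dk.
have [pi2 [c2 b2]] := @step _ _ _ _ _ hn hm _ (@swap_coupling _ _ _ _ _ c1) _ dm.
exists (fun p => pi2 (p.2, p.1)); split; first exact: (@swap_coupling _ _ _ _ _ c2).
apply: bigmax_le.
  by rewrite addr_ge0 //; [apply: le_trans (dk x0) | apply: le_trans (dm x0)].
move=> [x y] _ /=.
apply: le_trans (ler_distD (pi1 (x, y)) _ _) _.
by apply: lerD; [apply: b1 | apply: (b2 (y, x))].
Qed.
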